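(* Let $R=k[x_1,\dots,x_n]$ be a polynomial ring over a field $k$, let $I$ be an unmixed monomial ideal of $R$, let $\mathbf a\in\mathbb{Z}^n$, and let $F\subseteq[n]$ with $G_{\mathbf a}\subseteq F$. Then $F\setminus G_{\mathbf a}$ is a facet of $\Delta_{\mathbf a}(I)$ if and only if $F\in\mathcal F(I)$ and $x^{\mathbf a_+}\notin I_F$.
   Context: An ideal is unmixed if every associated prime is a minimal prime. For $\mathbf a=(a_1,\dots,a_n)\in\mathbb{Z}^n$ write $x^{\mathbf a}=x_1^{a_1}\cdots x_n^{a_n}$, $G_{\mathbf a}=\{i\in[n]\mid a_i<0\}$ with $[n]=\{1,\dots,n\}$, and let $\mathbf a_+$ be obtained from $\mathbf a$ by replacing every negative coordinate by $0$. For $F\subseteq[n]$ let $R_F=R[x_i^{-1}\mid i\in F]$ and let $P_F$ be the ideal generated by the variables $x_i$ with $i\notin F$. The degree complex is $\Delta_{\mathbf a}(I)=\{F\setminus G_{\mathbf a} \mid G_{\mathbf a}\subseteq F\subseteq[n],\ x^{\mathbf a}\notin IR_F\}$, a simplicial complex on $[n]$. $\mathcal F(I)$ is the set of all $F\subseteq[n]$ such that $P_F$ is a minimal prime of $I$, and for $F\in\mathcal F(I)$, $I_F$ denotes the primary component of $I$ associated with $P_F$. *)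

(* Defs.v *)
From HB Require Import structures.
From mathcomp Require Import all_boot all_order all_algebra.
From mathcomp Require Export mpoly.
Set Implicit Arguments. Unset Strict Implicit. Unset Printing Implicit Defensive.
Import Order.TTheory GRing.Theory Num.Theory.
Local Open Scope ring_scope.

Section Defs.
Variables (k : fieldType) (n : nat).
Local Notation R := {mpoly k[n]}.

Definition is_ideal (I : R -> Prop) : Prop :=
  [/\ I 0, (forall p q, I p -> I q -> I (p + q)) & (forall r p, I p -> I (r * p))].

Definition monomial_ideal (I : R -> Prop) : Prop :=
  exists S : 'X_{1..n} -> Prop, forall p, I p <->
    exists r : seq (R * 'X_{1..n}),
      (forall x, x \in r -> S x.2) /\ p = \sum_(x <- r) x.1 * 'X_[x.2].

Definition prime_ideal (P : R -> Prop) : Prop :=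
  [/\ is_ideal P, ~ P 1 & forall a b, P (a * b) -> P a \/ P b].

Definition subideal (I J : R -> Prop) : Prop := forall p, I p -> J p.

Definition minimal_prime (I P : R -> Prop) : Prop :=
  [/\ prime_ideal P, subideal I P &
      forall Q, prime_ideal Q -> subideal I Q -> subideal Q P -> subideal P Q].

Definition associated_prime (I P : R -> Prop) : Prop :=
  prime_ideal P /\ exists f : R, forall g, P g <-> I (g * f).

Definition unmixed (I : R -> Prop) : Prop :=
  forall P, associated_prime I P -> minimal_prime I P.

Definition PF (F : {set 'I_n}) (p : R) : Prop :=
  exists c : 'I_n -> R, p = \sum_(i < n | i \notin F) c i * 'X_i.

Definition Gset (a : 'I_n -> int) : {set 'I_n} := [set i | a i < 0].
Definition aplus (a : 'I_n -> int) : 'X_{1..n} :=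
  [multinom (if (a i < 0)%R then 0%N else absz (a i)) | i < n].

(* x^a \in I R_F, where R_F = R[x_i^-1 | i in F] (meaningful when G_a \subseteq F):
   there is a monomial x^u with u supported on F such that x^(a+u) is a
   monomial of R lying in I (i.e. x^a = x^(a+u) / x^u with x^(a+u) in I). *)
Definition in_loc (I : R -> Prop) (F : {set 'I_n}) (a : 'I_n -> int) : Prop :=
  exists u : 'I_n -> nat,
    (forall i, i \notin F -> u i = 0%N) /\
    (forall i, 0 <= a i + (u i)%:Z) /\
    I 'X_[[multinom absz (a i + (u i)%:Z)%R | i < n]].

Definition degree_complex (I : R -> Prop) (a : 'I_n -> int) (H : {set 'I_n}) : Prop :=
  exists F : {set 'I_n},
    [/\ Gset a \subset F, H = F :\: Gset a & ~ in_loc I F a].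

Definition is_facet (D : {set 'I_n} -> Prop) (H : {set 'I_n}) : Prop :=
  D H /\ forall H', D H' -> H \subset H' -> H' = H.

Definition calF (I : R -> Prop) (F : {set 'I_n}) : Prop := minimal_prime I (PF F).

(* I_F : the primary component of I associated with the minimal prime P_F,
   i.e. the contraction of I R_{P_F} to R. *)
Definition IF (I : R -> Prop) (F : {set 'I_n}) (f : R) : Prop :=
  exists g : R, ~ PF F g /\ I (g * f).

End Defs.

(* Main.v *)
Require Import Defs.
From mathcomp Require Import all_boot all_order all_algebra.
From mathcomp Require Import mpoly.
From mathcomp Require Import zify.
From Stdlib Require Import Classical.
Set Implicit Arguments. Unset Strict Implicit. Unset Printing Implicit Defensive.
Import Order.TTheory GRing.Theory Num.Theory.
Local Open Scope ring_scope.

Section PFsec.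
Variables (k : fieldType) (n : nat).
Local Notation R := {mpoly k[n]}.
Implicit Types (F : {set 'I_n}) (m w : 'X_{1..n}) (p q g : R).

Definition Fsupp (F : {set 'I_n}) (m : 'X_{1..n}) : bool :=
  [forall i, (i \notin F) ==> (m i == 0%N)].

Lemma FsuppP (F : {set 'I_n}) (m : 'X_{1..n}) : reflect (forall i, i \notin F -> m i = 0%N) (Fsupp F m).
Proof.
apply: (iffP forallP) => [h i iF|h i]; first by move: (h i); rewrite iF => /eqP.
by apply/implyP => /h ->.
Qed.

Lemma PF_ideal F : is_ideal (PF (k:=k) F).
Proof.
split.
- by exists (fun _ => 0); rewrite big1 // => i _; rewrite mul0r.
- move=> p q [c ->] [d ->]; exists (fun i => c i + d i).
  by rewrite -big_split /=; apply: eq_bigr => i _; rewrite mulrDl.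
- move=> r p [c ->]; exists (fun i => r * c i).
  by rewrite mulr_sumr; apply: eq_bigr => i _; rewrite mulrA.
Qed.

Lemma ideal_sum (J : R -> Prop) (T : Type) (r : seq T) (P : pred T) (f : T -> R) :
  is_ideal J -> (forall i, P i -> J (f i)) -> J (\sum_(i <- r | P i) f i).
Proof.
case=> J0 JD JM Hf; elim/big_ind: _ => //.
Qed.

Lemma PF_Xi F i : i \notin F -> PF (k:=k) F 'X_i.
Proof.
move=> iF; exists (fun j => if j == i then 1 else 0).
rewrite (bigD1 i) //= eqxx mul1r big1 ?addr0 // => j /andP [_ /negbTE ->].
by rewrite mul0r.
Qed.

Lemma PF_X F m : ~~ Fsupp F m -> PF (k:=k) F 'X_[m].
Proof.
move=> /FsuppP h.
have [i [iF mi]] : exists i, i \notin F /\ m i <> 0%N.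
  apply: NNPP => H; apply: h => i iF; apply: NNPP => mi; apply: H; by exists i.
have -> : m = ((m - U_(i)) + U_(i))%MM.
  rewrite submK //; apply/mnm_lepP => j; rewrite mnm1E.
  case: eqP => [<-|_] //; by case: (m i) mi.
rewrite mpolyXD; case: (PF_ideal F) => _ _ HM; apply: HM; exact: PF_Xi.
Qed.

Definition phiT (F : {set 'I_n}) : n.-tuple R :=
  [tuple (if i \in F then 'X_i else 0) | i < n].
Definition phi F (p : R) : R := comp_mpoly (phiT F) p.

Lemma phiM F p q : phi F (p * q) = phi F p * phi F q.
Proof. by rewrite /phi rmorphM. Qed.
Lemma phi1 F : phi F 1 = 1.
Proof. by rewrite /phi rmorph1. Qed.

Lemma phiX F m : phi F 'X_[m] = if Fsupp F m then 'X_[m] else 0.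
Proof.
rewrite /phi comp_mpolyX; case: ifP => [/FsuppP h|].
  rewrite [RHS]mpolyXE_id; apply: eq_bigr => i _; rewrite tnth_mktuple.
  by case: ifP => // /negbT /h ->; rewrite !expr0.
move/negbT => /FsuppP h.
have [i [iF mi]] : exists i, i \notin F /\ m i <> 0%N.
  apply: NNPP => H; apply: h => i iF; apply: NNPP => mi; apply: H; by exists i.
rewrite (bigD1 i) //= tnth_mktuple (negbTE iF) expr0n.
by case: (m i) mi => //= _ _; rewrite mul0r.
Qed.

Lemma phiXi F i : i \notin F -> phi F 'X_i = 0.
Proof.
move=> iF; rewrite phiX; case: ifP => // /FsuppP /(_ i iF).
by rewrite mnm1E eqxx.
Qed.

Lemma PF_phi F p : PF F p -> phi F p = 0.
Proof.
case=> c ->; rewrite /phi rmorph_sum big1 // => i iF.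
by rewrite rmorphM /= -/(phi F 'X_i) phiXi // mulr0.
Qed.

Lemma phi_PF F p : phi F p = 0 -> PF F p.
Proof.
move=> h0.
have -> : p = p - phi F p by rewrite h0 subr0.
have -> : p - phi F p = \sum_(m <- msupp p) (p@_m *: 'X_[m] - phi F (p@_m *: 'X_[m])).
  by rewrite sumrB -raddf_sum -mpolyE.
apply: ideal_sum; first exact: PF_ideal.
move=> m _; rewrite /phi comp_mpolyZ -/(phi F 'X_[m]) phiX -scalerBr.
case: ifP => [_|/negbT h]; first by rewrite subrr scaler0; case: (PF_ideal F).
rewrite subr0 -mul_mpolyC; case: (PF_ideal F) => _ _ HM; apply: HM.
exact: PF_X.
Qed.

Lemma PF_prime F : prime_ideal (PF (k:=k) F).
Proof.
split; first exact: PF_ideal.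
- by move/PF_phi; rewrite phi1; apply/eqP; exact: oner_neq0.
- move=> p q /PF_phi; rewrite phiM => /eqP; rewrite mulf_eq0 => /orP [] /eqP h.
  + by left; apply: phi_PF.
  + by right; apply: phi_PF.
Qed.

Lemma X_neq0 (m : 'X_{1..n}) : 'X_[m] != 0 :> R.
Proof.
apply/eqP => h; have := mcoeffX k m m; rewrite h mcoeff0 eqxx => /esym/eqP.
by rewrite oner_eq0.
Qed.

Lemma notPF_X F m : Fsupp F m -> ~ PF (k:=k) F 'X_[m].
Proof. by move=> h /PF_phi; rewrite phiX h; apply/eqP; exact: X_neq0. Qed.

Lemma notPF_supp F g : ~ PF (k:=k) F g -> exists2 w, w \in msupp g & Fsupp F w.
Proof.
move=> h; case: (boolP (has (Fsupp F) (msupp g))) => [/hasP [w ? ?]|hn].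
  by exists w.
exfalso; apply: h; rewrite (mpolyE g); apply: ideal_sum; first exact: PF_ideal.
move=> m _; case: (boolP (m \in msupp g)) => [mg|].
  rewrite -mul_mpolyC; case: (PF_ideal F) => _ _ HM; apply: HM; apply: PF_X.
  by apply: contra hn => fm; apply/hasP; exists m.
by move/memN_msupp_eq0 ->; rewrite scale0r; case: (PF_ideal F).
Qed.
End PFsec.
Section Mon.
Variables (k : fieldType) (n : nat).
Local Notation R := {mpoly k[n]}.
Implicit Types (F : {set 'I_n}) (m w : 'X_{1..n}) (p q g : R).
Variable I : R -> Prop.
Hypothesis HI : monomial_ideal I.

Lemma mon_ideal : is_ideal I.
Proof.
case: HI => S HS; split.
- by apply/HS; exists [::]; rewrite big_nil.
- move=> p q /HS [r1 [h1 ->]] /HS [r2 [h2 ->]]; apply/HS; exists (r1 ++ r2).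
  split; last by rewrite big_cat.
  by move=> x; rewrite mem_cat => /orP [/h1|/h2].
- move=> r p /HS [r1 [h1 ->]]; apply/HS.
  exists [seq (r * x.1, x.2) | x <- r1]; split.
    by move=> x /mapP [y /h1 ? ->].
  by rewrite big_map mulr_sumr; apply: eq_bigr => x _; rewrite mulrA.
Qed.

Lemma mon_mul r p : I p -> I (r * p).
Proof. by case: mon_ideal => _ _ H; apply: H. Qed.

Lemma mon_supp p m : I p -> m \in msupp p -> I 'X_[m].
Proof.
case: HI => S HS /HS [r [hr ->]] /msupp_sum_le /flattenP [s /mapP [x xr ->]].
rewrite filter_predT in xr.
rewrite (perm_mem (msuppMX _ _)) => /mapP [m' _ ->].
rewrite mpolyXD mulrC; apply: mon_mul; apply/HS; exists [:: (1, x.2)]; split.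
  by move=> y; rewrite inE => /eqP -> /=; apply: hr.
by rewrite big_cons big_nil addr0 mul1r.
Qed.

Lemma mon_le m m' : (m <= m')%MM -> I 'X_[m] -> I 'X_[m'].
Proof. by move=> /submK <- h; rewrite mpolyXD; apply: mon_mul. Qed.

End Mon.

Section Loc.
Variables (k : fieldType) (n : nat).
Local Notation R := {mpoly k[n]}.
Implicit Types (F : {set 'I_n}) (m w : 'X_{1..n}) (p q g : R).

Definition Loc (I : R -> Prop) (a : 'I_n -> int) F :=
  exists v, Fsupp F v /\ I 'X_[aplus a + v].

Lemma aplusE (a : 'I_n -> int) i : aplus a i = if (a i < 0)%R then 0%N else absz (a i).
Proof. by rewrite /aplus mnmE. Qed.

Lemma in_locE I a F : Gset a \subset F -> in_loc I F a <-> Loc I a F.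
Proof.
move=> /subsetP HG; split.
- case=> u [hu [hpos hI]].
  exists [multinom (absz (a i + (u i)%:Z)%R - aplus a i)%N | i < n]; split.
    apply/FsuppP => i iF; rewrite mnmE aplusE hu //.
    have : i \notin Gset a by apply: contra iF; apply: HG.
    rewrite inE => /negbTE ->; lia.
  suff -> : (aplus a + [multinom (absz (a i + (u i)%:Z)%R - aplus a i)%N | i < n])%MM
     = [multinom absz (a i + (u i)%:Z)%R | i < n] by [].
  apply/mnmP => i; rewrite mnmDE !mnmE. have := hpos i.
  case: ifP => h _; lia.
- case=> v [/FsuppP hv hI].
  exists (fun i => if (a i < 0)%R then (absz (a i) + v i)%N else v i); split.
    move=> i iF; have : i \notin Gset a by apply: contra iF; apply: HG.
    by rewrite inE => /negbTE ->; apply: hv.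
  split; first by move=> i; case: ifP => h; lia.
  suff <- : (aplus a + v)%MM = 
    [multinom absz (a i + ((if (a i < 0)%R then (absz (a i) + v i)%N else v i))%:Z)%R | i < n] by [].
  apply/mnmP => i; rewrite mnmDE !mnmE; case: ifP => h; lia.
Qed.
End Loc.
Lemma setD_inj (n : nat) (G F F0 : {set 'I_n}) :
  G \subset F -> G \subset F0 -> F :\: G = F0 :\: G -> F = F0.
Proof.
move=> /subsetP h1 /subsetP h2 /setP E; apply/setP => x.
case: (boolP (x \in G)) => xG; first by rewrite h1 // h2.
by have := E x; rewrite !in_setD xG.
Qed.

Section Main.
Variables (k : fieldType) (n : nat).
Local Notation R := {mpoly k[n]}.
Variable I : R -> Prop.
Hypothesis HI : monomial_ideal I.
Variables (a : 'I_n -> int) (F : {set 'I_n}).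
Hypothesis HGF : Gset a \subset F.
Local Notation A := (aplus a).

Lemma PF_sub (F1 F2 : {set 'I_n}) : F1 \subset F2 -> subideal (PF (k:=k) F2) (PF F1).
Proof.
move=> /subsetP s p [c ->]; apply: ideal_sum; first exact: PF_ideal.
move=> i iF; case: (@PF_ideal k _ F1) => _ _ HM; apply: HM; apply: PF_Xi.
by apply: contra iF; apply: s.
Qed.

Lemma rhs_lhs : calF I F -> ~ IF I F 'X_[A] -> is_facet (degree_complex I a) (F :\: Gset a).
Proof.
move=> Hcal HIF.
have nloc : ~ Loc I a F.
  case=> v [fv hv]; apply: HIF; exists 'X_[v]; split; first exact: notPF_X.
  by rewrite -mpolyXD addmC.
split; first by exists F; split => // /(in_locE _ HGF).
move=> H' [F' [HGF' -> nl']] sub.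
have FF' : F \subset F'.
  apply/subsetP => x xF; case: (boolP (x \in Gset a)) => xG.
    by apply: (subsetP HGF').
  have : x \in F :\: Gset a by rewrite in_setD xG.
  by move/(subsetP sub); rewrite in_setD => /andP [].
have F'F : F' \subset F.
  apply/subsetP => j jF'; apply: NNPP => jF.
  have sub' : subideal I (PF (k:=k) F').
    move=> p Ip; apply: NNPP => np; case: (notPF_supp np) => w wp fw.
    apply: nl'; apply/(in_locE _ HGF'); exists w; split => //.
    apply: (mon_le HI (lem_addl _ _)).
    exact: (mon_supp HI Ip wp).
  case: Hcal => _ _ Hmin.
  have jF2 : j \notin F by apply/negP.
  have := Hmin _ (PF_prime k F') sub' (PF_sub FF') 'X_j (PF_Xi k jF2).
  apply: notPF_X; apply/FsuppP => i iF'; rewrite mnm1E.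
  by case: eqP => // ji; move: iF'; rewrite -ji jF'.
have -> // : F' = F by apply/eqP; rewrite eqEsubset F'F FF'.
Qed.

Lemma lhs_rhs : unmixed I -> is_facet (degree_complex I a) (F :\: Gset a) -> calF I F /\ ~ IF I F 'X_[A].
Proof.
move=> Hun [[F0 [HG0 E0 nl0]] Hmax].
have EF : F = F0 by apply: setD_inj HGF HG0 E0.
subst F0.
have nloc : ~ Loc I a F by move/(in_locE _ HGF).
have Hext : forall j, exists v, j \notin F -> Fsupp (j |: F) v /\ I 'X_[A + v].
  move=> j; case: (boolP (j \in F)) => jF; first by exists 0%MM.
  apply: NNPP => H.
  have HG' : Gset a \subset j |: F by apply: subset_trans HGF (subsetUr _ _).
  have nl : ~ in_loc I (j |: F) a.
    by move/(in_locE _ HG') => [v hv]; apply: H; exists v.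
  have := Hmax ((j |: F) :\: Gset a).
  have jG : j \notin Gset a by apply: contra jF; apply: (subsetP HGF).
  move=> /(_ (ex_intro _ (j |: F) (And3 HG' erefl nl)) (setSD _ (subsetUr _ _))) E.
  have : j \in (j |: F) :\: Gset a by rewrite in_setD jG setU11.
  by rewrite E in_setD (negbTE jF) andbF.
have [V hV] := fin_all_exists Hext.
pose Cz (c : 'X_{1..n}) := [forall i, (i \in F) ==> (c i == 0%N)].
pose T c := Cz c /\ forall w, Fsupp F w -> ~ I 'X_[A + c + w].
have bound : forall c, T c -> forall j, j \notin F -> (c j < V j j)%N.
  move=> c [cz hc] j jF; rewrite ltnNge; apply/negP => le.
  have [fV IV] := hV j jF.
  apply: (hc [multinom if i \in F then V j i else 0%N | i < n]).
    by apply/FsuppP => i iF; rewrite mnmE (negbTE iF).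
  apply: (mon_le HI _ IV); apply/mnm_lepP => i; rewrite !mnmDE mnmE.
  case: (boolP (i \in F)) => iF; first lia.
  case: (eqVneq i j) => [->|ij]; first lia.
  have : V j i = 0%N.
    by apply: (FsuppP _ _ fV); rewrite in_setU1 negb_or ij.
  lia.
pose B := (\sum_(i < n) V i i)%N.
have degb : forall c, T c -> (mdeg c <= B)%N.
  move=> c Tc; rewrite mdegE /B; apply: leq_sum => i _.
  case: (boolP (i \in F)) => iF.
    by case: Tc => /forallP /(_ i); rewrite iF /= => /eqP ->.
  exact: ltnW (bound c Tc i iF).
have [c [Tc Hc]] : exists c, T c /\ forall j, j \notin F -> ~ T (c + U_(j))%MM.
  apply: NNPP => H.
  have grow : forall t, exists c, T c /\ (t <= mdeg c)%N.
    elim=> [|t [c [Tc le]]].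
      exists 0%MM; split => //; split.
        by apply/forallP => i; apply/implyP => _; rewrite mnm0E.
      by move=> w fw; rewrite addm0 => Iw; apply: nloc; exists w.
    have : exists j, j \notin F /\ T (c + U_(j))%MM.
      apply: NNPP => H2; apply: H; exists c; split => // j jF Tj.
      by apply: H2; exists j.
    case=> j [_ Tj]; exists (c + U_(j))%MM; split => //.
    by rewrite mdegD mdeg1 addn1.
  have [c [Tc le]] := grow B.+1; have := degb c Tc; lia.
have hW : forall j, exists w, j \notin F -> Fsupp F w /\ I 'X_[A + (c + U_(j)) + w].
  move=> j; case: (boolP (j \in F)) => jF; first by exists 0%MM.
  apply: NNPP => H; apply: (Hc j jF); split.
    apply/forallP => i; apply/implyP => iF; rewrite mnmDE mnm1E.
    case: Tc => /forallP /(_ i); rewrite iF /= => /eqP ->.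
    have ji : (j == i) = false by apply/eqP => ji; move: jF; rewrite ji iF.
    by move=> _; rewrite ji.
  by move=> w fw Iw; apply: H; exists w.
have [W0 hW0] := fin_all_exists hW.
pose W := (\sum_(j | j \notin F) W0 j)%MM.
have fW : Fsupp F W.
  apply/FsuppP => i iF; rewrite mnm_sumE big1 // => j jF.
  by case: (hW0 j jF) => /FsuppP h _; apply: h.
have leW : forall j, j \notin F -> forall i, (W0 j i <= W i)%N.
  by move=> j jF i; rewrite mnm_sumE (bigD1 j) //= leq_addr.
pose b := (A + c + W)%MM.
have h1 : forall w, Fsupp F w -> ~ I 'X_[b + w].
  move=> w fw; rewrite /b -addmA; apply: Tc.2.
  apply/FsuppP => i iF; rewrite mnmDE (FsuppP _ _ fW i iF) (FsuppP _ _ fw i iF).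
  by [].
have h2 : forall j, j \notin F -> I ('X_j * 'X_[b]).
  move=> j jF; rewrite -mpolyXD; have [_ Iw] := hW0 j jF.
  apply: (mon_le HI _ Iw); apply/mnm_lepP => i; rewrite !mnmDE mnm1E.
  have := leW j jF i; lia.
split.
  apply: Hun; split; first exact: PF_prime.
  exists 'X_[b] => g; split.
    case=> cc ->; rewrite mulr_suml; apply: ideal_sum; first exact: mon_ideal.
    by move=> i iF; rewrite -mulrA; apply: mon_mul => //; apply: h2.
  move=> Ig; apply: NNPP => ng; case: (notPF_supp ng) => w wg fw.
  apply: (h1 w fw); apply: (mon_supp HI Ig).
  by rewrite (perm_mem (msuppMX _ _)); apply/mapP; exists w.
case=> g [ng Ig]; case: (notPF_supp ng) => w wg fw; apply: nloc; exists w.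
split => //; apply: (mon_supp HI Ig).
by rewrite (perm_mem (msuppMX _ _)); apply/mapP; exists w.
Qed.

End Main.

Theorem proposition1p6 (k : fieldType) (n : nat) (I : {mpoly k[n]} -> Prop)
    (HI : monomial_ideal I) (Hun : unmixed I)
    (a : 'I_n -> int) (F : {set 'I_n}) (HGF : Gset a \subset F) :
  is_facet (degree_complex I a) (F :\: Gset a) <->
  (calF I F /\ ~ IF I F 'X_[aplus a]).
Proof.
split; first exact: lhs_rhs.
by case=> h1 h2; apply: rhs_lhs.
Qed.
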